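(* Let $n,m\ge1$, $r>0$, and let $\mathbf b_1,\dots,\mathbf b_m\in[0,\infty)^n$ be nonzero vectors. Put $D_{ij}=\frac{r}{m}(\mathbf b_i\cdot\mathbf b_j)$ and $\overline D=\max_{i,j}D_{ij}$. Define $\alpha^{(t)}\in\mathbb{R}^m$, $t\ge0$, by $\alpha^{(0)}_k=\sqrt{1/(\overline D m)}$ for all $k$, and, given $\alpha^{(t)}$: let $E_i^{(t)}=\sum_{j=1}^m D_{ij}\alpha^{(t)}_i\alpha^{(t)}_j-1$, choose $k=k_t$ with $|E^{(t)}_k|\ge|E^{(t)}_i|$ for all $i$, set $\alpha^{(t+1)}_i=\alpha^{(t)}_i$ for $i\neq k$ and $\alpha^{(t+1)}_k=\frac{-s+\sqrt{s^2+4D_{kk}}}{2D_{kk}}$ with $s=\sum_{i\ne k}D_{ik}\alpha^{(t)}_i$. Let $E^{(t)}=\sum_{i=1}^m|E^{(t)}_i|$ and $E^\infty=\lim_{t\to\infty}E^{(t)}$. If $E^\infty>0$, then there is $c>0$ such that for every $t\ge0$, with $k=k_t$, $$\big|\alpha^{(t+1)}_k-\alpha^{(t)}_k\big|\,D_{kk}\,\alpha^{(t)}_k\ \ge\ c .$$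
   Context: The limit $E^\infty$ exists because $(E^{(t)})$ is a nonincreasing sequence of nonnegative numbers. *)

(* Defs.v *)
From HB Require Import structures.
From mathcomp Require Import all_boot all_order all_algebra.
From mathcomp Require Import all_classical all_reals all_analysis.
Set Implicit Arguments. Unset Strict Implicit. Unset Printing Implicit Defensive.
Import Order.TTheory GRing.Theory Num.Theory.
Local Open Scope ring_scope.

Section Defs.
Variables (R : realType) (n m : nat) (r : R) (b : 'I_m -> 'I_n -> R).

Definition Dm (i j : 'I_m) : R := r / m%:R * \sum_(l < n) b i l * b j l.

(* Dbar = max_{i,j} D_ij  (all D_ij >= 0, so 0 is a harmless neutral element) *)
Definition Dbar : R := \big[Num.max/0]_(ij : 'I_m * 'I_m) Dm ij.1 ij.2.

Definition alpha0 (k : 'I_m) : R := Num.sqrt (1 / (Dbar * m%:R)).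

Definition Ei (a : 'I_m -> R) (i : 'I_m) : R :=
  \sum_(j < m) Dm i j * a i * a j - 1.

Definition Etot (a : 'I_m -> R) : R := \sum_(i < m) `|Ei a i|.

Definition upd (a : 'I_m -> R) (k : 'I_m) : 'I_m -> R :=
  fun i => if i == k then
     let s := \sum_(j < m | j != k) Dm j k * a j in
     (- s + Num.sqrt (s ^+ 2 + 4 * Dm k k)) / (2 * Dm k k)
   else a i.
End Defs.

(* Main.v *)
Require Import Defs.
From HB Require Import structures.
From mathcomp Require Import all_boot all_order all_algebra.
From mathcomp Require Import all_classical all_reals all_analysis.
From mathcomp Require Import ring lra.
Import Order.TTheory GRing.Theory Num.Theory.
Import numFieldNormedType.Exports.
Set Implicit Arguments. Unset Strict Implicit.
Local Open Scope ring_scope.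

Lemma Dsym (R : realType) (n m : nat) (r : R) b i j : Dm (n:=n) (m:=m) r b i j = Dm r b j i.
Proof. rewrite /Dm; congr (_ * _); apply: eq_bigr => l _; exact: mulrC. Qed.

Lemma Dge0 (R : realType) (n m : nat) (r : R) b i j : 0 <= r -> (forall i l, 0 <= b i l) ->
  0 <= Dm (n:=n) (m:=m) r b i j.
Proof.
move=> r0 b0; rewrite /Dm; apply: mulr_ge0; first by apply: divr_ge0.
by apply: sumr_ge0 => l _; apply: mulr_ge0.
Qed.

Lemma Dpos (R : realType) (n m : nat) (r : R) b i : 0 < r -> (0 < m)%N -> (forall i l, 0 <= b i l) ->
  (exists l, b i l != 0) -> 0 < Dm (n:=n) (m:=m) r b i i.
Proof.
move=> r0 m0 b0 [l bl]; rewrite /Dm; apply: mulr_gt0; first by apply: divr_gt0; rewrite ?ltr0n.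
rewrite (bigD1 l) //=; apply: ltr_wpDr; first by apply: sumr_ge0 => j _; apply: mulr_ge0.
by apply: mulr_gt0; rewrite lt_def bl b0.
Qed.

Lemma Dle_bar (R : realType) (n m : nat) (r : R) b i j : Dm (n:=n) (m:=m) r b i j <= Dbar r b.
Proof. by rewrite /Dbar (bigD1 (i, j)) //= le_max lexx. Qed.
Lemma root_prop (R : realType) (s d : R) : 0 < d -> 0 <= s ->
  let x := (- s + Num.sqrt (s ^+ 2 + 4 * d)) / (2 * d) in
  0 < x /\ d * x ^+ 2 + s * x = 1.
Proof.
move=> d0 s0 x.
set q := Num.sqrt (s ^+ 2 + 4 * d).
have hq : q ^+ 2 = s ^+ 2 + 4 * d by rewrite sqr_sqrtr //; nra.
have q0 : 0 <= q by apply: sqrtr_ge0.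
have sq : s < q.
  rewrite -(ger0_norm s0) -sqrtr_sqr /q ltr_sqrt; last by nra.
  by lra.
have d2 : 2 * d != 0 by apply: lt0r_neq0; lra.
have hx : 2 * d * x = - s + q by rewrite /x mulrC divfK.
split.
  have : 0 < 2 * d * x by lra.
  by rewrite pmulr_rgt0 //; lra.
have h4 : 4 * d * (d * x ^+ 2 + s * x) = 4 * d * 1.
  have -> : 4 * d * (d * x ^+ 2 + s * x) = (2 * d * x) ^+ 2 + 2 * s * (2 * d * x) by ring.
  rewrite hx; nra.
by move/mulfI: h4; apply; lra.
Qed.

Definition sk (R : realType) (n m : nat) (r : R) (b : 'I_m -> 'I_n -> R) (a : 'I_m -> R) (k : 'I_m) : R :=
  \sum_(j < m | j != k) Dm (n:=n) r b j k * a j.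

Lemma Ei_split (R : realType) (n m : nat) (r : R) (b : 'I_m -> 'I_n -> R) (a : 'I_m -> R) (k : 'I_m) :
  Ei (n:=n) r b a k = a k * (Dm r b k k * a k + sk r b a k) - 1.
Proof.
rewrite /Ei /sk (bigD1 k) //= mulrDr; congr (_ + _ - _).
  by ring.
rewrite mulr_sumr; apply: eq_bigr => j _; rewrite Dsym; ring.
Qed.

Lemma upd_k (R : realType) (n m : nat) (r : R) (b : 'I_m -> 'I_n -> R) (a : 'I_m -> R) (k : 'I_m) :
  upd (n:=n) r b a k k = (- sk r b a k + Num.sqrt (sk r b a k ^+ 2 + 4 * Dm r b k k)) / (2 * Dm r b k k).
Proof. by rewrite /upd eqxx. Qed.

Lemma upd_ne (R : realType) (n m : nat) (r : R) (b : 'I_m -> 'I_n -> R) (a : 'I_m -> R) (k i : 'I_m) : i != k ->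
  upd (n:=n) r b a k i = a i.
Proof. by move=> ik; rewrite /upd (negbTE ik). Qed.

Lemma sk_upd (R : realType) (n m : nat) (r : R) (b : 'I_m -> 'I_n -> R) (a : 'I_m -> R) (k : 'I_m) :
  sk (n:=n) r b (upd r b a k) k = sk r b a k.
Proof. by apply: eq_bigr => j jk; rewrite upd_ne. Qed.

Lemma Ei_other (R : realType) (n m : nat) (r : R) (b : 'I_m -> 'I_n -> R) (a : 'I_m -> R) (k i : 'I_m) : i != k ->
  Ei (n:=n) r b (upd r b a k) i = Ei r b a i + Dm r b i k * a i * (upd r b a k k - a k).
Proof.
move=> ik; rewrite /Ei (bigD1 k) //= [in RHS](bigD1 k) //= [upd r b a k i]upd_ne //.
have -> : \sum_(j < m | j != k) Dm r b i j * a i * upd r b a k j =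
          \sum_(j < m | j != k) Dm r b i j * a i * a j.
  by apply: eq_bigr => j jk; rewrite upd_ne.
ring.
Qed.

Lemma step_facts (R : realType) (n m : nat) (r : R) (b : 'I_m -> 'I_n -> R) (a : 'I_m -> R) (k : 'I_m) :
  (forall i j, 0 <= Dm r b i j) -> 0 < Dm r b k k -> (forall j, 0 <= a j) ->
  let x := upd r b a k k in let s := sk r b a k in let d := Dm r b k k in
  [/\ 0 <= s, 0 < x, d * x ^+ 2 + s * x = 1, Ei r b (upd r b a k) k = 0 &
      Ei r b a k = (a k - x) * (d * (a k + x) + s)].
Proof.
move=> hD hDk ha x s d.
have s0 : 0 <= s by apply: sumr_ge0 => j _; apply: mulr_ge0.
have [x0 hx] := root_prop hDk s0.
rewrite -/s -upd_k -/x in x0 hx.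
have E0 : Ei r b (upd r b a k) k = 0.
  rewrite Ei_split sk_upd -/s -/x -/d.
  have -> : x * (d * x + s) = d * x ^+ 2 + s * x by ring.
  by rewrite hx subrr.
split => //.
rewrite Ei_split -/s -/d.
have -> : a k * (d * a k + s) - 1 = a k * (d * a k + s) - (d * x ^+ 2 + s * x) by rewrite hx.
ring.
Qed.

Lemma Etot_dec (R : realType) (n m : nat) (r : R) (b : 'I_m -> 'I_n -> R) (a : 'I_m -> R) (k : 'I_m) :
  (forall i j, 0 <= Dm r b i j) -> 0 < Dm r b k k -> (forall j, 0 <= a j) ->
  Etot r b (upd r b a k) <= Etot r b a.
Proof.
move=> hD hDk ha.
have [s0 x0 hx E0 Ek] := step_facts hD hDk ha.
set x := upd r b a k k in x0 hx E0 Ek.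
set s := sk r b a k in s0 hx E0 Ek.
set d := Dm r b k k in hDk hx E0 Ek.
rewrite /Etot (bigD1 k) //= E0 normr0 add0r [X in _ <= X](bigD1 k) //= addrC.
apply: (@le_trans _ _ (\sum_(i < m | i != k) (`|Ei r b a i| + Dm r b i k * a i * `|x - a k|))).
  apply: ler_sum => i ik; rewrite Ei_other // -/x.
  apply: le_trans (ler_normD _ _) _; rewrite lerD2l normrM ger0_norm //.
  by apply: mulr_ge0.
rewrite big_split /= lerD2l -mulr_suml.
rewrite Ek normrM distrC mulrC.
apply: ler_wpM2l; first exact: normr_ge0.
have hak := ha k.
have hp : 0 <= d * (a k + x) by apply: mulr_ge0; lra.
rewrite ger0_norm; last by apply: addr_ge0.
rewrite -/(sk r b a k) -/s; lra.
Qed.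

Lemma key_eq (R : realType) (n m : nat) (r : R) (b : 'I_m -> 'I_n -> R) (a : 'I_m -> R) (k : 'I_m) :
  (forall i j, 0 <= Dm r b i j) -> 0 < Dm r b k k -> (forall j, 0 <= a j) ->
  let x := upd r b a k k in let d := Dm r b k k in
  `|x - a k| * d * a k * (d * a k * x + 1) = `|Ei r b a k| * (d * a k * x).
Proof.
move=> hD hDk ha x d.
have [s0 x0 hx E0 Ek] := step_facts hD hDk ha.
rewrite -/x -/d in x0 hx Ek hDk.
have h1 : Ei r b a k * x = (a k - x) * (d * a k * x + 1).
  rewrite Ek -hx; ring.
have h2 : `|Ei r b a k| * x = `|x - a k| * (d * a k * x + 1).
  have hak := ha k.
  have hp : 0 <= d * a k * x + 1.
    have : 0 <= d * a k * x by apply: mulr_ge0; [apply: mulr_ge0|]; lra.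
    lra.
  have := congr1 (fun z : R => `|z|) h1; rewrite !normrM (ger0_norm (ltW x0)) (ger0_norm hp) (distrC (a k)).
  done.
have -> : `|Ei r b a k| * (d * a k * x) = (`|Ei r b a k| * x) * (d * a k) by ring.
rewrite h2; ring.
Qed.

Lemma a_le (R : realType) (d a : R) : 0 < d -> 0 < a -> d * a ^+ 2 <= 1 -> a <= 1 + 1 / d.
Proof.
move=> d0 a0 h.
have : d * a <= d + 1.
  case: (lerP a 1) => ha.
    have : d * a <= d * 1 by apply: ler_wpM2l; lra.
    lra.
  have : d * a <= d * a ^+ 2.
    rewrite expr2 mulrA; apply: ler_peMr; [apply: mulr_ge0|]; lra.
  lra.
move=> h2.
have dn : d != 0 by apply: lt0r_neq0.
rewrite -(@ler_pM2l _ d) // mulrDr mulr1 mulrA mulr1 divff //.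
Qed.

Lemma inv_step (R : realType) (n m : nat) (r : R) (b : 'I_m -> 'I_n -> R) (a : 'I_m -> R) (k : 'I_m) (U S L : R) :
  (forall i j, 0 <= Dm r b i j) -> (forall i, 0 < Dm r b i i) ->
  (forall j, 0 < a j /\ Dm r b j j * a j ^+ 2 <= 1 /\ L <= a j) ->
  (forall j, 1 + 1 / Dm r b j j <= U) -> (forall k, \sum_(j < m) Dm r b j k <= S) ->
  0 < U -> 0 < S -> L <= 1 / (U * S) ->
  forall j, 0 < upd r b a k j /\ Dm r b j j * upd r b a k j ^+ 2 <= 1 /\ L <= upd r b a k j.
Proof.
move=> hD hDp hinv hU hS U0 S0 hL j.
case: (eqVneq j k) => [->|jk]; last by rewrite upd_ne.
have ha : forall j, 0 <= a j by move=> i; have [? _] := hinv i; lra.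
have hDk := hDp k.
have [s0 x0 hx E0 Ek] := step_facts hD hDk ha.
set x := upd r b a k k in x0 hx E0 Ek *.
set s := sk r b a k in s0 hx E0 Ek.
set d := Dm r b k k in hDk hx E0 Ek *.
have sx : 0 <= s * x by apply: mulr_ge0; lra.
have dx2 : d * x ^+ 2 <= 1 by lra.
split => //; split => //.
have xU : x <= U by apply: le_trans (hU k); exact: a_le.
have aU : forall i, a i <= U.
  move=> i; have [ai [hi _]] := hinv i; apply: le_trans (hU i); exact: a_le.
have hsU : s <= \sum_(j < m | j != k) Dm r b j k * U.
  by apply: ler_sum => i _; apply: ler_wpM2l.
have hdU : d * x + s <= U * S.
  have : d * x <= d * U by apply: ler_wpM2l; lra.
  have : d * U + \sum_(j < m | j != k) Dm r b j k * U = U * \sum_(j < m) Dm r b j k.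
    by rewrite [in RHS](bigD1 k) //= mulrDr mulr_sumr mulrC; congr (_ + _); apply: eq_bigr => i _; rewrite mulrC.
  have := hS k.
  have : U * \sum_(j < m) Dm r b j k <= U * S by apply: ler_wpM2l; [lra | exact: hS].
  lra.
have h1 : x * (d * x + s) = 1 by rewrite -hx; ring.
apply: le_trans hL _.
rewrite ler_pdivrMr; last by apply: mulr_gt0.
rewrite -h1; apply: ler_wpM2l; lra.
Qed.

Lemma final_ineq (R : realType) (Y E p q g : R) :
  0 < q -> q <= p -> 0 < g -> g <= E -> 0 <= Y -> Y * (p + 1) = E * p ->
  g * (q / (q + 1)) <= Y.
Proof.
move=> q0 qp g0 gE Y0 hY.
have p0 : 0 < p by lra.
have h1 : g * q <= g * p by apply: ler_wpM2l; lra.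
have h2 : g * p <= E * p by apply: ler_wpM2r; lra.
have h3 : (p + 1) * (g * q) <= (p + 1) * (Y * (q + 1)).
  have -> : (p + 1) * (Y * (q + 1)) = E * p * (q + 1) by rewrite -hY; ring.
  have : g * p * (q + 1) <= E * p * (q + 1) by apply: ler_wpM2r; lra.
  have -> : (p + 1) * (g * q) = g * p * q + g * q by ring.
  have -> : g * p * (q + 1) = g * p * q + g * p by ring.
  lra.
rewrite ler_pM2l in h3; last by lra.
rewrite mulrA ler_pdivrMr; last by lra.
exact: h3.
Qed.

Theorem lemma4 (R : realType) (n m : nat) (r : R) (b : 'I_m -> 'I_n -> R)
  (alpha : nat -> 'I_m -> R) (k : nat -> 'I_m) :
  (0 < n)%N -> (0 < m)%N -> 0 < r ->
  (forall i l, 0 <= b i l) ->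
  (forall i, exists l, b i l != 0) ->
  alpha 0%N = alpha0 r b ->
  (forall t i, `|Ei r b (alpha t) i| <= `|Ei r b (alpha t) (k t)|) ->
  (forall t, alpha t.+1 = upd r b (alpha t) (k t)) ->
  0 < limn (fun t => Etot r b (alpha t)) ->
  exists2 c : R, 0 < c &
    forall t, c <= `|alpha t.+1 (k t) - alpha t (k t)| * Dm r b (k t) (k t) * alpha t (k t).
Proof.
move=> n0 m0 r0 b0 bnz h0 hk hupd hlim.
have hD : forall i j, 0 <= Dm r b i j by move=> i j; apply: Dge0 => //; exact: ltW.
have hDp : forall i, 0 < Dm r b i i by move=> i; apply: Dpos.
pose i0 := Ordinal m0.
have Db0 : 0 < Dbar r b := lt_le_trans (hDp i0) (Dle_bar _ _ _ _).
have mR : 1 <= m%:R :> R by rewrite ler1n.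
pose a0 := Num.sqrt (1 / (Dbar r b * m%:R)).
have X0 : 0 < 1 / (Dbar r b * m%:R) by apply: divr_gt0 => //; apply: mulr_gt0 => //; lra.
have a0p : 0 < a0 by rewrite sqrtr_gt0.
have a0sq : a0 ^+ 2 = 1 / (Dbar r b * m%:R) by rewrite sqr_sqrtr // ltW.
have a0D : forall j, Dm r b j j * a0 ^+ 2 <= 1.
  move=> j; rewrite a0sq mulrA mulr1 ler_pdivrMr; last by apply: mulr_gt0 => //; lra.
  rewrite mul1r; have := Dle_bar r b j j.
  have : Dbar r b * 1 <= Dbar r b * m%:R by apply: ler_wpM2l => //; lra.
  lra.
pose U := \sum_(i < m) (1 + 1 / Dm r b i i).
have hU : forall j, 1 + 1 / Dm r b j j <= U.
  move=> j; rewrite /U (bigD1 j) //= lerDl; apply: sumr_ge0 => i _.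
  have := hDp i => hi; have : 0 < 1 / Dm r b i i by apply: divr_gt0.
  lra.
have U0 : 0 < U.
  apply: lt_le_trans (hU i0); have : 0 < 1 / Dm r b i0 i0 by apply: divr_gt0.
  lra.
pose S := \sum_(i < m) \sum_(j < m) Dm r b i j.
have hS : forall kk, \sum_(j < m) Dm r b j kk <= S.
  move=> kk; apply: ler_sum => j _; rewrite [X in _ <= X](bigD1 kk) //= lerDl.
  by apply: sumr_ge0.
have S0 : 0 < S.
  have h : Dm r b i0 i0 <= \sum_(j < m) Dm r b j i0.
    by rewrite (bigD1 i0) //= lerDl; apply: sumr_ge0.
  exact: lt_le_trans (hDp i0) (le_trans h (hS i0)).
pose L := Num.min a0 (1 / (U * S)).
have L0 : 0 < L by rewrite lt_min a0p divr_gt0 // mulr_gt0.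
have hL : L <= 1 / (U * S) by rewrite ge_min lexx orbT.
have inv : forall t j, 0 < alpha t j /\ Dm r b j j * alpha t j ^+ 2 <= 1 /\ L <= alpha t j.
  elim => [|t IH] j.
    rewrite h0 /alpha0 -/a0; split => //; split => //.
    by rewrite ge_min lexx.
  rewrite hupd; exact: inv_step.
have apos : forall t j, 0 <= alpha t j by move=> t j; have [? _] := inv t j; lra.
have mon : forall t, Etot r b (alpha t.+1) <= Etot r b (alpha t).
  by move=> t; rewrite hupd; apply: Etot_dec.
have cvg : cvgn (fun t => Etot r b (alpha t)).
  apply: nonincreasing_is_cvgn; first by apply/nonincreasing_seqP.
  exists 0 => y [t _ <-]; apply: sumr_ge0 => i _; exact: normr_ge0.
have hge := nonincreasing_cvgn_ge (proj1 (nonincreasing_seqP _) mon) cvg.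
set e := limn _ in hlim hge.
have hEk : forall t, Etot r b (alpha t) <= m%:R * `|Ei r b (alpha t) (k t)|.
  move=> t; rewrite /Etot; apply: le_trans (ler_sum _ (fun i _ => hk t i)) _.
  by rewrite sumr_const card_ord mulr_natl.
pose q := L * L / U.
have q0 : 0 < q by apply: divr_gt0 => //; apply: mulr_gt0.
exists (e / m%:R * (q / (q + 1))).
  apply: mulr_gt0; first by apply: divr_gt0 => //; lra.
  by apply: divr_gt0 => //; lra.
move=> t.
have key := key_eq hD (hDp (k t)) (apos t).
rewrite -hupd in key.
apply: (final_ineq q0 _ _ _ _ key).
- have [_ [_ La]] := inv t (k t).
  have [_ [_ Lx]] := inv t.+1 (k t).
  have dU : 1 / U <= Dm r b (k t) (k t).
    have hd := hDp (k t).
    have h1 := hU (k t).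
    rewrite ler_pdivrMr //.
    have : 1 / Dm r b (k t) (k t) <= U by lra.
    rewrite ler_pdivrMr // => h2.
    by rewrite mulrC.
  have -> : q = 1 / U * L * L by rewrite /q; field; lra.
  apply: ler_pM; [| lra | | exact: Lx].
  + by apply: mulr_ge0; [apply: divr_ge0; lra | lra].
  + apply: ler_pM => //; [apply: divr_ge0; lra | lra].
- by apply: divr_gt0 => //; lra.
- rewrite ler_pdivrMr; last by lra.
  rewrite mulrC; exact: le_trans (hge t) (hEk t).
- apply: mulr_ge0; last exact: apos.
  by apply: mulr_ge0; [exact: normr_ge0 | exact: hD].
Qed.
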